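(* Let $\mathcal M=(M,\le,{}^\perp)$ be a complete orthomodular lattice, $L$ an involutive submonoid of $\mathbf{Lin}(\mathcal M)$ containing all Sasaki projections, and $\mathscr P(L)=(\mathscr P(L),\bigcup,\odot,{}^*,{\sim},\{\mathrm{id}_M\})$ the corresponding involutive generalized dynamic algebra. Then $\mathscr P(L)$ is a semi-Foulis dynamic algebra.
   Context: For an orthomodular lattice and $m\in M$, $\pi_m(x)=m\wedge(m^\perp\vee x)$. A map $f\colon M\to M$ is linear if there is $g\colon M\to M$ (unique, written $f^*$) with $f(x)\le y^\perp\iff x\le g(y)^\perp$ for all $x,y$. $\mathbf{Lin}(\mathcal M)$ is the involutive monoid of linear maps under composition, $f\mapsto f^*$, $\mathrm{id}_M$. $\mathscr P(L)$ is the powerset of $L$ with union, $A\odot B=\{a\circ b\}$, $A^*=\{a^*\mid a\in A\}$, ${\sim}A=\{\pi_{(\bigvee_{a\in A}a(1))^\perp}\}$. An involutive generalized dynamic algebra $(K,\bigsqcup,\odot,{}^*,{\sim},e)$ has test set $\widetilde K=\{{\sim}k\}$, joins $\bigvee W={\sim}{\sim}(\bigsqcup W)$ on $\widetilde K$, $w^\perp={\sim}w$, and $k\preceq l$ iff $\bigvee\{k,l\}=l$; it is a semi-Foulis dynamic algebra if $(\widetilde K,\preceq,{}^\perp)$ is a complete orthomodular lattice. *)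

(* Defs.v *)
Set Implicit Arguments.

Definition is_lub {T : Type} (C : T -> Prop) (le : T -> T -> Prop)
  (S : T -> Prop) (u : T) : Prop :=
  C u /\ (forall x, S x -> le x u) /\
  (forall v, C v -> (forall x, S x -> le x v) -> le u v).

Definition is_glb {T : Type} (C : T -> Prop) (le : T -> T -> Prop)
  (S : T -> Prop) (u : T) : Prop :=
  C u /\ (forall x, S x -> le u x) /\
  (forall v, C v -> (forall x, S x -> le v x) -> le v u).

Definition pair {T : Type} (x y : T) : T -> Prop := fun z => z = x \/ z = y.

Definition complete_OML_on {T : Type} (C : T -> Prop)
  (le : T -> T -> Prop) (orth : T -> T) : Prop :=
  (forall x, C x -> le x x) /\
  (forall x y, C x -> C y -> le x y -> le y x -> x = y) /\
  (forall x y z, C x -> C y -> C z -> le x y -> le y z -> le x z) /\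
  (forall S, (forall x, S x -> C x) -> exists u, is_lub C le S u) /\
  (forall x, C x -> C (orth x)) /\
  (forall x, C x -> orth (orth x) = x) /\
  (forall x y, C x -> C y -> le x y -> le (orth y) (orth x)) /\
  (forall x z, C x -> C z -> le z x -> le z (orth x) ->
     forall w, C w -> le z w) /\ (* x /\ x^perp = 0 *)
  (* orthomodular law: x <= y -> y = x \/ (y /\ x^perp) *)
  (forall x y m u, C x -> C y -> le x y ->
     is_glb C le (pair y (orth x)) m ->
     is_lub C le (pair x m) u -> u = y).

Definition cOML (M : Type) (le : M -> M -> Prop) (orth : M -> M)
  (sup : (M -> Prop) -> M) : Prop :=
  complete_OML_on (fun _ => True) le orth /\
  (forall S, is_lub (fun _ => True) le S (sup S)).

Section OMLops.
Variables (M : Type) (le : M -> M -> Prop) (orth : M -> M)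
  (sup : (M -> Prop) -> M).
Definition ljoin (x y : M) : M := sup (pair x y).
Definition lmeet (x y : M) : M := orth (ljoin (orth x) (orth y)).
Definition ltop : M := sup (fun _ => True).

Definition sasaki (m : M) : M -> M := fun x => lmeet m (ljoin (orth m) x).

Definition adjoint_of (f g : M -> M) : Prop :=
  forall x y, le (f x) (orth y) <-> le x (orth (g y)).

Definition linear (f : M -> M) : Prop := exists g, adjoint_of f g.

Definition involutive_submonoid_Lin (L : (M -> M) -> Prop) : Prop :=
  (forall f, L f -> linear f) /\
  L (fun x => x) /\
  (forall f g, L f -> L g -> L (fun x => f (g x))) /\
  (forall f g, L f -> adjoint_of f g -> L g).

Definition PL_carrier (L : (M -> M) -> Prop) (A : (M -> M) -> Prop) : Prop :=
  forall a, A a -> L a.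
Definition PL_union (W : ((M -> M) -> Prop) -> Prop) : (M -> M) -> Prop :=
  fun f => exists A, W A /\ A f.
Definition PL_odot (A B : (M -> M) -> Prop) : (M -> M) -> Prop :=
  fun f => exists a b, A a /\ B b /\ f = (fun x => a (b x)).
Definition PL_star (A : (M -> M) -> Prop) : (M -> M) -> Prop :=
  fun g => exists a, A a /\ adjoint_of a g.
Definition PL_neg (A : (M -> M) -> Prop) : (M -> M) -> Prop :=
  fun f => f = sasaki (orth (sup (fun m => exists a, A a /\ m = a ltop))).
Definition PL_unit : (M -> M) -> Prop := fun f => f = (fun x => x).
End OMLops.

Definition semi_Foulis {K : Type} (Kc : K -> Prop)
  (bigU : (K -> Prop) -> K) (neg : K -> K) : Prop :=
  let tests := fun k => exists l, Kc l /\ k = neg l in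
  let tjoin := fun W => neg (neg (bigU W)) in
  let prec := fun k l => tjoin (pair k l) = l in
  complete_OML_on tests prec neg.

(* Main.v *)
Require Import Defs.


Lemma lub_uniq {M : Type} {le : M -> M -> Prop} {orth : M -> M} {sup : (M -> Prop) -> M}
  (H : cOML le orth sup) (S S' : M -> Prop) u v :
  is_lub (fun _ => True) le S u -> is_lub (fun _ => True) le S' v ->
  (forall x, S x <-> S' x) -> u = v.
Proof.
  destruct H as [[rf [an [tr _]]] _].
  intros [_ [Hu1 Hu2]] [_ [Hv1 Hv2]] E.
  apply an; auto.
  - apply Hu2; auto. intros x Sx; apply Hv1, E, Sx.
  - apply Hv2; auto. intros x Sx; apply Hu1, E, Sx.
Qed.

Lemma sup_ext {M : Type} {le : M -> M -> Prop} {orth : M -> M} {sup : (M -> Prop) -> M}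
  (H : cOML le orth sup) (S S' : M -> Prop) :
  (forall x, S x <-> S' x) -> sup S = sup S'.
Proof.
  intros E. eapply lub_uniq; eauto; apply (proj2 H).
Qed.

Lemma sup_single {M : Type} {le : M -> M -> Prop} {orth : M -> M} {sup : (M -> Prop) -> M}
  (H : cOML le orth sup) (S : M -> Prop) m :
  (forall x, S x <-> x = m) -> sup S = m.
Proof.
  intros E. pose proof H as H'. destruct H' as [[rf [an [tr _]]] lub].
  eapply lub_uniq with (S' := fun x => x = m); eauto.
  split; [exact I|split].
  - intros x ->; auto.
  - intros v _ Hv; auto.
Qed.

Lemma join_lub {M : Type} {le : M -> M -> Prop} {orth : M -> M} {sup : (M -> Prop) -> M}
  (H : cOML le orth sup) a b c :
  le (ljoin sup a b) c <-> le a c /\ le b c.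
Proof.
  destruct H as [[rf [an [tr _]]] lub].
  destruct (lub (pair a b)) as [_ [H1 H2]].
  unfold ljoin. split.
  - intros Hc; split; apply tr with (y := sup (pair a b)); auto; apply H1; unfold pair; auto.
  - intros [Ha Hb]; apply H2; auto. intros x [-> | ->]; auto.
Qed.

Lemma join_ub {M : Type} {le : M -> M -> Prop} {orth : M -> M} {sup : (M -> Prop) -> M}
  (H : cOML le orth sup) a b :
  le a (ljoin sup a b) /\ le b (ljoin sup a b).
Proof.
  apply (join_lub H). destruct H as [[rf _] _]. auto.
Qed.

Lemma join_eq {M : Type} {le : M -> M -> Prop} {orth : M -> M} {sup : (M -> Prop) -> M}
  (H : cOML le orth sup) a b :
  ljoin sup a b = b <-> le a b.
Proof.
  pose proof (join_ub H a b) as [U1 U2].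
  split.
  - intros E; rewrite <- E; auto.
  - intros Hab. pose proof H as H0. destruct H0 as [[rf [an _]] _]. apply an; auto.
    apply (join_lub H). auto.
Qed.

Lemma top_max {M : Type} {le : M -> M -> Prop} {orth : M -> M} {sup : (M -> Prop) -> M}
  (H : cOML le orth sup) x : le x (ltop sup).
Proof. destruct H as [_ lub]. apply (lub (fun _ => True)); auto. Qed.

Lemma bot_min {M : Type} {le : M -> M -> Prop} {orth : M -> M} {sup : (M -> Prop) -> M}
  (H : cOML le orth sup) x : le (orth (ltop sup)) x.
Proof.
  pose proof (top_max H (orth x)) as T.
  destruct H as [[_ [_ [_ [_ [_ [oo [anti _]]]]]]] _].
  rewrite <- (oo x); auto; apply anti; auto.
Qed.

Lemma sasaki_top {M : Type} {le : M -> M -> Prop} {orth : M -> M} {sup : (M -> Prop) -> M}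
  (H : cOML le orth sup) m : sasaki orth sup m (ltop sup) = m.
Proof.
  unfold sasaki, lmeet.
  assert (E1 : ljoin sup (orth m) (ltop sup) = ltop sup).
  { apply (join_eq H). apply (top_max H). }
  rewrite E1.
  assert (E2 : ljoin sup (orth m) (orth (ltop sup)) = orth m).
  { pose proof H as H'. destruct H' as [[rf [an _]] _].
    apply an; auto.
    - apply (join_lub H). split; auto. apply (bot_min H).
    - apply (join_ub H). }
  rewrite E2. destruct H as [[_ [_ [_ [_ [_ [oo _]]]]]] _]. auto.
Qed.

Definition Tm {M : Type} (orth : M -> M) (sup : (M -> Prop) -> M) (m : M) : (M -> M) -> Prop :=
  fun f => f = sasaki orth sup m.

Lemma negE {M : Type} (orth : M -> M) (sup : (M -> Prop) -> M) (A : (M -> M) -> Prop) :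
  PL_neg orth sup A = Tm orth sup (orth (sup (fun m => exists a, A a /\ m = a (ltop sup)))).
Proof. reflexivity. Qed.

Lemma neg_T {M : Type} {le : M -> M -> Prop} {orth : M -> M} {sup : (M -> Prop) -> M}
  (H : cOML le orth sup) m : PL_neg orth sup (Tm orth sup m) = Tm orth sup (orth m).
Proof.
  rewrite negE. f_equal. f_equal. apply (sup_single H).
  intros x; split.
  - intros [a [Ea ->]]. rewrite Ea. apply (sasaki_top H).
  - intros ->. exists (sasaki orth sup m). split; [reflexivity|]. symmetry; apply (sasaki_top H).
Qed.

Lemma T_inj {M : Type} {le : M -> M -> Prop} {orth : M -> M} {sup : (M -> Prop) -> M}
  (H : cOML le orth sup) m n : Tm orth sup m = Tm orth sup n -> m = n.
Proof.
  intros E. assert (E2 : Tm orth sup m (sasaki orth sup m)) by reflexivity.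
  rewrite E in E2. unfold Tm in E2.
  rewrite <- (sasaki_top H m), <- (sasaki_top H n), E2. reflexivity.
Qed.

Lemma oo_of {M : Type} {le : M -> M -> Prop} {orth : M -> M} {sup : (M -> Prop) -> M}
  (H : cOML le orth sup) m : orth (orth m) = m.
Proof. destruct H as [[_ [_ [_ [_ [_ [oo _]]]]]] _]. auto. Qed.

Lemma tjoin_T {M : Type} {le : M -> M -> Prop} {orth : M -> M} {sup : (M -> Prop) -> M}
  (H : cOML le orth sup) m n :
  PL_neg orth sup (PL_neg orth sup (PL_union (pair (Tm orth sup m) (Tm orth sup n))))
  = Tm orth sup (ljoin sup m n).
Proof.
  rewrite (negE _ _ (PL_union _)).
  rewrite (neg_T H). rewrite (oo_of H). f_equal. apply (sup_ext H).
  intros x; split.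
  - intros [a [[A [[-> | ->] HA]] ->]]; unfold Tm in HA; rewrite HA, (sasaki_top H); unfold pair; auto.
  - intros [-> | ->].
    + exists (sasaki orth sup m); split; [exists (Tm orth sup m); split; [left; reflexivity | reflexivity] |].
      symmetry; apply (sasaki_top H).
    + exists (sasaki orth sup n); split; [exists (Tm orth sup n); split; [right; reflexivity | reflexivity] |].
      symmetry; apply (sasaki_top H).
Qed.

Lemma prec_T {M : Type} {le : M -> M -> Prop} {orth : M -> M} {sup : (M -> Prop) -> M}
  (H : cOML le orth sup) m n :
  PL_neg orth sup (PL_neg orth sup (PL_union (pair (Tm orth sup m) (Tm orth sup n))))
  = Tm orth sup n <-> le m n.
Proof.
  rewrite (tjoin_T H). split.
  - intros E. apply (join_eq H). apply (T_inj H _ _ E).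
  - intros E. apply (join_eq H) in E. rewrite E. reflexivity.
Qed.

Lemma tests_iff {M : Type} {le : M -> M -> Prop} {orth : M -> M} {sup : (M -> Prop) -> M}
  (L : (M -> M) -> Prop)
  (H : cOML le orth sup) (HL : forall m, L (sasaki orth sup m)) k :
  (exists l, PL_carrier L l /\ k = PL_neg orth sup l) <-> exists m, k = Tm orth sup m.
Proof.
  split.
  - intros [l [_ ->]]. eexists. apply negE.
  - intros [m ->]. exists (Tm orth sup (orth m)). split.
    + intros a Ha. unfold Tm in Ha. rewrite Ha. apply HL.
    + rewrite (neg_T H), (oo_of H). reflexivity.
Qed.

Theorem theorem3p11 (M : Type) (le : M -> M -> Prop) (orth : M -> M)
  (sup : (M -> Prop) -> M) (L : (M -> M) -> Prop) :
  cOML le orth sup ->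
  involutive_submonoid_Lin le orth L ->
  (forall m : M, L (sasaki orth sup m)) ->
  semi_Foulis (PL_carrier L) (@PL_union M) (PL_neg orth sup).
Proof.
  intros H _ HS.
  pose proof (tests_iff L H HS) as TI.
  pose proof H as H'.
  destruct H' as [[rf [an [tr [cp [oc [oo [anti [zero om]]]]]]]] lub].
  unfold semi_Foulis, complete_OML_on. cbv zeta.
  split; [|split; [|split; [|split; [|split; [|split; [|split; [|split]]]]]]].
  - intros x Hx. apply TI in Hx as [m ->]. apply (prec_T H). auto.
  - intros x y Hx Hy. apply TI in Hx as [m ->]. apply TI in Hy as [n ->].
    intros E1 E2. apply (prec_T H) in E1. apply (prec_T H) in E2.
    rewrite (an m n); auto.
  - intros x y z Hx Hy Hz. apply TI in Hx as [m ->]. apply TI in Hy as [n ->].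
    apply TI in Hz as [p ->].
    intros E1 E2. apply (prec_T H) in E1. apply (prec_T H) in E2. apply (prec_T H).
    eauto.
  - intros S HSs. exists (Tm orth sup (sup (fun a => S (Tm orth sup a)))).
    destruct (lub (fun a => S (Tm orth sup a))) as [_ [U1 U2]].
    split; [apply TI; eauto|split].
    + intros x Sx. pose proof (HSs x Sx) as Hx. apply TI in Hx as [m ->].
      apply (prec_T H). auto.
    + intros v Hv Hub. apply TI in Hv as [n ->]. apply (prec_T H). apply U2; auto.
      intros a Sa. apply (prec_T H). apply Hub. auto.
  - intros x Hx. apply TI in Hx as [m ->]. apply TI. rewrite (neg_T H). eauto.
  - intros x Hx. apply TI in Hx as [m ->]. rewrite !(neg_T H), oo; auto.
  - intros x y Hx Hy. apply TI in Hx as [m ->]. apply TI in Hy as [n ->].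
    rewrite !(neg_T H). intros E. apply (prec_T H) in E. apply (prec_T H). auto.
  - intros x z Hx Hz. apply TI in Hx as [a ->]. apply TI in Hz as [c ->].
    rewrite (neg_T H). intros E1 E2 w Hw. apply TI in Hw as [d ->].
    apply (prec_T H) in E1. apply (prec_T H) in E2. apply (prec_T H).
    apply (zero a c); auto.
  - intros x y m u Hx Hy. apply TI in Hx as [a ->]. apply TI in Hy as [b ->].
    intros Hab Hglb Hlub. apply (prec_T H) in Hab.
    destruct Hglb as [Hm [G1 G2]]. apply TI in Hm as [c ->].
    destruct Hlub as [Hu [L1 L2]]. apply TI in Hu as [d ->].
    rewrite (neg_T H) in G1, G2.
    assert (Hg : is_glb (fun _ => True) le (pair b (orth a)) c).
    { split; [exact I|split].
      - intros x [-> | ->]; apply (prec_T H); apply G1; unfold pair; auto.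
      - intros v _ Hv. apply (prec_T H). apply G2; [apply TI; eauto|].
        intros x [-> | ->]; apply (prec_T H); apply Hv; unfold pair; auto. }
    assert (Hl : is_lub (fun _ => True) le (pair a c) d).
    { split; [exact I|split].
      - intros x [-> | ->]; apply (prec_T H); apply L1; unfold pair; auto.
      - intros v _ Hv. apply (prec_T H). apply L2; [apply TI; eauto|].
        intros x [-> | ->]; apply (prec_T H); apply Hv; unfold pair; auto. }
    rewrite (om a b c d); auto.
Qed.
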